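(* Let $R_1,\dots,R_{10}\subset[0,1]^2$ be rectangles with arbitrary side lengths and let $g_i$ be supported on $R_i$. Then for $1\le p\le\infty$, every integer $s\ge2$, every $N\ge1$ and every ball $B_N\subset\mathbb{R}^5$ of radius $N$, $$\Big\|\Big(\prod_{i=1}^{10}|E_{R_i}g_i|\Big)^{1/10}\Big\|_{L^p(w_{B_N})}\le N^{2^{-s}}\Big\|\Big(\prod_{i=1}^{10}\sum_{l(\tau_s)=N^{-2^{-s}}}|E_{\tau_s}g_i|^2\Big)^{1/20}\Big\|_{L^p(w_{B_N})},$$ where $\tau_s$ ranges over a partition of $[0,1]^2$ into squares of side length $N^{-2^{-s}}$.
   Context: $e(z)=e^{2\pi iz}$; for $S\subset[0,1]^2$, $E_Sg(x)=\int_Sg(s,t)e(x_1s+x_2t+x_3s^2+x_4t^2+x_5st)\,ds\,dt$; for a ball $B$ of center $c(B)$ and radius $r$, $w_B(x)=(1+|x-c(B)|/r)^{-100}$ and $\|f\|_{L^p(w_B)}=(\int|f|^pw_B)^{1/p}$ (with the usual weighted sup-norm convention for $p=\infty$). *)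

(* Defs.v *)
From HB Require Import structures.
From mathcomp Require Import all_boot all_order all_algebra.
From mathcomp Require Import all_classical all_reals all_analysis ess_sup_inf.
From mathcomp.real_closed Require Import complex.

Set Implicit Arguments.
Unset Strict Implicit.
Unset Printing Implicit Defensive.

Import Order.TTheory GRing.Theory Num.Theory.
Import numFieldNormedType.Exports.

Local Open Scope classical_set_scope.
Local Open Scope ring_scope.

Section Defs.
Variable R : realType.

Definition R2 := (R * R)%type.
Definition R5 := ((((R * R) * R) * R) * R)%type.

Definition leb2 := (@lebesgue_measure R \x @lebesgue_measure R)%E.
Definition leb5 :=
  ((((@lebesgue_measure R \x @lebesgue_measure R) \x @lebesgue_measure R)
      \x @lebesgue_measure R) \x @lebesgue_measure R)%E.

Definition x1 (x : R5) : R := x.1.1.1.1.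
Definition x2 (x : R5) : R := x.1.1.1.2.
Definition x3 (x : R5) : R := x.1.1.2.
Definition x4 (x : R5) : R := x.1.2.
Definition x5 (x : R5) : R := x.2.

Definition dist5 (x y : R5) : R :=
  Num.sqrt ((x1 x - x1 y) ^+ 2 + (x2 x - x2 y) ^+ 2 + (x3 x - x3 y) ^+ 2
            + (x4 x - x4 y) ^+ 2 + (x5 x - x5 y) ^+ 2).

Definition cabs (z : R[i]) : R :=
  Num.sqrt (complex.Re z ^+ 2 + complex.Im z ^+ 2).

Definition expe (z : R) : R[i] := Complex (cos (2 * pi * z)) (sin (2 * pi * z)).

Definition cintegral2 (S : set R2) (f : R2 -> R[i]) : R[i] :=
  Complex (Rintegral leb2 S (fun z => complex.Re (f z)))
          (Rintegral leb2 S (fun z => complex.Im (f z))).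

Definition phase (x : R5) (st : R2) : R :=
  x1 x * st.1 + x2 x * st.2 + x3 x * st.1 ^+ 2 + x4 x * st.2 ^+ 2
  + x5 x * st.1 * st.2.

Definition Eop (S : set R2) (g : R2 -> R[i]) (x : R5) : R[i] :=
  cintegral2 S (fun st => g st * expe (phase x st)).

Definition wB (c : R5) (r : R) (x : R5) : R :=
  ((1 + dist5 x c / r) ^+ 100)^-1.

(* ||F||_{L^p(w_B)} for 1 <= p <= oo;
   p = +oo: essential supremum of |F| w_B (weighted sup-norm convention) *)
Definition wLnorm (p : \bar R) (c : R5) (r : R) (F : R5 -> R) : \bar R :=
  match p with
  | q%:E => ((\int[leb5]_x ((`|F x| `^ q * wB c r x)%:E)) `^ q^-1)%E
  | +oo%E => ess_sup leb5 (fun x => (`|F x| * wB c r x)%:E)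
  | -oo%E => 0%E
  end.

Definition unit_square : set R2 := `[0, 1] `*` `[0, 1].

Definition is_rect_in_unit_square (S : set R2) : Prop :=
  exists a1 b1 a2 b2 : R,
    [/\ 0 <= a1 <= b1, b1 <= 1, 0 <= a2 <= b2, b2 <= 1 &
        S = `[a1, b1] `*` `[a2, b2]].

Definition square (d : R) (c : R2) : set R2 :=
  `[c.1, c.1 + d] `*` `[c.2, c.2 + d].
Definition open_square (d : R) (c : R2) : set R2 :=
  `]c.1, c.1 + d[ `*` `]c.2, c.2 + d[.

(* the list of corners cs describes a partition of [0,1]^2 into squares
   of side length d (squares contained in [0,1]^2, covering it, with
   pairwise disjoint interiors, i.e. overlapping only on boundaries) *)
Definition square_partition (d : R) (cs : seq R2) : Prop :=
  [/\ (forall c, c \in cs -> square d c `<=` unit_square),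
      unit_square `<=` \bigcup_(c in [set c | c \in cs]) square d c &
      (forall i j : nat, (i < size cs)%N -> (j < size cs)%N -> i <> j ->
         open_square d (nth (0, 0) cs i) `&` open_square d (nth (0, 0) cs j)
         = set0)].

End Defs.

(* Main.v *)
Require Import Defs.
From HB Require Import structures.
From mathcomp Require Import all_boot all_order all_algebra.
From mathcomp Require Import all_classical all_reals all_analysis ess_sup_inf.
From mathcomp.real_closed Require Import complex.
From mathcomp Require Import ring lra.
Import Order.TTheory GRing.Theory Num.Theory.
Import numFieldNormedType.Exports.
Local Open Scope classical_set_scope.
Local Open Scope ring_scope.
Lemma lebT (R : realType) : (@lebesgue_measure R setT = +oo)%E.
Proof. by rewrite -set_itvNyy lebesgue_measure_itv /=. Qed.
Lemma prodT (R : realType) d1 d2 (T1 : measurableType d1) (T2 : measurableType d2)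
  (m1 : {measure set T1 -> \bar R}) (m2 : {sigma_finite_measure set T2 -> \bar R}) :
  m1 setT = +oo%E -> m2 setT = +oo%E -> ((m1 \x m2)%E setT = +oo)%E.
Proof. by move=> h1 h2; rewrite -setXTT product_measure1E // h1 h2 mulyy. Qed.
Lemma leb5T (R : realType) : (0 < @leb5 R setT)%E.
Proof.
have -> : @leb5 R setT = +oo%E.
  by apply: prodT; [apply: prodT; [apply: prodT; [apply: prodT|]|]|]; exact: lebT.
by [].
Qed.
Section P1.
Variable (R : realType).
Import HBNNSimple.
Local Open Scope ereal_scope.
Variables (d : measure_display) (T : measurableType d) (mu : {measure set T -> \bar R}).

Lemma nnint_le (f g : T -> \bar R) : (forall x, 0 <= f x) -> (forall x, f x <= g x) ->
  \int[mu]_x f x <= \int[mu]_x g x.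
Proof.
move=> f0 fg.
have g0 : forall x, 0 <= g x by move=> x; exact: le_trans (f0 x) (fg x).
rewrite !ge0_integralTE //.
apply: ge_ereal_sup => _ [h /= hf <-]; apply: ereal_sup_ubound => /=.
by exists h => // x; exact: le_trans (hf x) (fg x).
Qed.

Lemma nnint_scale (f : T -> \bar R) (k : R) : (0 < k)%R -> (forall x, 0 <= f x) ->
  \int[mu]_x (k%:E * f x) <= k%:E * \int[mu]_x f x.
Proof.
move=> k0 f0.
have kf0 : forall x, 0 <= k%:E * f x by move=> x; rewrite mule_ge0 // lee_fin ltW.
rewrite !ge0_integralTE //.
apply: ge_ereal_sup => _ [h /= hf <-].
have ki0 : (0 <= k^-1)%R by rewrite invr_ge0 ltW.
pose h' := scale_nnsfun h ki0.
have -> : sintegral mu h = k%:E * sintegral mu h'.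
  by rewrite /h' /= sintegralrM muleA -EFinM mulfV ?gt_eqF // mul1e.
apply: lee_wpmul2l; first by rewrite lee_fin ltW.
apply: ereal_sup_ubound => /=; exists h' => // x /=.
have -> : f x = (k^-1)%:E * (k%:E * f x).
  by rewrite muleA -EFinM mulVf ?gt_eqF // mul1e.
by rewrite EFinM; apply: lee_wpmul2l; [rewrite lee_fin|exact: hf].
Qed.
End P1.

Lemma wB_ge0 (R : realType) (c : R5 R) (N : R) x : 0 < N -> 0 <= wB c N x.
Proof.
move=> N0; rewrite /wB invr_ge0 exprn_ge0 // addr_ge0 // divr_ge0 ?sqrtr_ge0 //.
exact: ltW.
Qed.

Lemma wLnorm_le (R : realType) (p : \bar R) (c : R5 R) (N k : R) (F G : R5 R -> R) :
  (1 <= p)%E -> 0 < N -> 0 < k -> (forall x, `|F x| <= k * `|G x|) ->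
  (wLnorm p c N F <= k%:E * wLnorm p c N G)%E.
Proof.
move=> p1 N0 k0 FG.
case: p p1 => [q||] //; rewrite ?lee_fin => q1 /=.
- have q0 : 0 <= q by rewrite (le_trans ler01).
  have key : forall x, `|F x| `^ q * wB c N x <= k `^ q * (`|G x| `^ q * wB c N x).
    move=> x; rewrite mulrA; apply: ler_wpM2r; first exact: wB_ge0.
    rewrite -powRM ?normr_ge0 ?(ltW k0) //.
    apply: (ge0_ler_powR q0); rewrite ?nnegrE ?mulr_ge0 ?(ltW k0) //; exact: FG.
  have I1 : (\int[@leb5 R]_x ((`|F x| `^ q * wB c N x)%:E) <=
            (k `^ q)%:E * \int[@leb5 R]_x ((`|G x| `^ q * wB c N x)%:E))%E.
    apply: le_trans; last apply: nnint_scale.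
    + apply: nnint_le => x; first by rewrite lee_fin mulr_ge0 ?powR_ge0 ?wB_ge0.
      by rewrite -EFinM lee_fin key.
    + by rewrite powR_gt0.
    + by move=> x; rewrite lee_fin mulr_ge0 ?powR_ge0 ?wB_ge0.
  have I0 : (0 <= \int[@leb5 R]_x ((`|G x| `^ q * wB c N x)%:E))%E.
    by apply: integral_ge0 => x _; rewrite lee_fin mulr_ge0 ?powR_ge0 ?wB_ge0.
  apply: le_trans.
    apply: gt0_ler_poweR; last exact: I1.
    - by rewrite invr_ge0.
    - rewrite in_itv /= leey andbT; apply: integral_ge0 => x _.
      by rewrite lee_fin mulr_ge0 ?powR_ge0 ?wB_ge0.
    - by rewrite in_itv /= leey andbT mule_ge0 // lee_fin powR_ge0.
  rewrite poweRM ?lee_fin ?powR_ge0 // poweR_EFin -powRrM mulfV ?gt_eqF ?(lt_le_trans ltr01) //.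
  by rewrite powRr1 // ltW.
- rewrite -ess_supZl ?leb5T ?(ltW k0) //.
  apply: le_ess_sup; apply: nearW => x /=.
  rewrite -EFinM lee_fin mulrA; apply: ler_wpM2r; first exact: wB_ge0.
  exact: FG.
Qed.
Section Rsum.
Context (R : realType) d (X : measurableType d) (m : {measure set X -> \bar R}).
Lemma Rint_sum (I : eqType) (s : seq I) (F : I -> X -> R) :
  (forall i, m.-integrable setT (EFin \o F i)) ->
  m.-integrable setT (EFin \o (fun z => \sum_(i <- s) F i z)) /\
  Rintegral m setT (fun z => \sum_(i <- s) F i z) = \sum_(i <- s) Rintegral m setT (F i).
Proof.
move=> hF; elim: s => [|a s [IHi IHe]].
  have -> : (fun z => \sum_(i <- [::]) F i z) = cst 0 by apply/funext => z; rewrite big_nil.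
  split; first exact: integrable0.
  by rewrite big_nil /Rintegral integral0.
have -> : (fun z => \sum_(i <- a :: s) F i z) = (fun z => F a z + \sum_(i <- s) F i z).
  by apply/funext => z; rewrite big_cons.
set G := (fun z => \sum_(i <- s) F i z) in IHi IHe *.
split.
  have -> : EFin \o (fun z => F a z + G z) =
    ((EFin \o F a) \+ (EFin \o G))%E by apply/funext.
  exact: integrableD.
by rewrite RintegralD // IHe big_cons.
Qed.
End Rsum.

Section P3.
Variable R : realType.
Local Notation T := (R2 R).
Local Notation mu := (@leb2 R).

Definition bd (d : R) (t : T) : set T :=
  ([set t.1] `*` setT) `|` ([set t.1 + d] `*` setT) `|`
  (setT `*` [set t.2]) `|` (setT `*` [set t.2 + d]).

Lemma lebs1 (a : R) : @lebesgue_measure R [set a] = 0%E.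
Proof.
by rewrite -(set_itv1 a) lebesgue_measure_itv /= lte_fin ltxx.
Qed.

Lemma mbd d t : measurable (bd d t).
Proof.
by apply: measurableU; [apply: measurableU; [apply: measurableU|]|];
  apply: measurableX => //; exact: measurable_set1.
Qed.
Lemma prod0l d1 d2 (T1 : measurableType d1) (T2 : measurableType d2)
  (m1 : {measure set T1 -> \bar R}) (m2 : {sigma_finite_measure set T2 -> \bar R}) A B :
  measurable A -> measurable B -> m1 A = 0%E -> ((m1 \x m2) (A `*` B) = 0)%E.
Proof. by move=> mA mB A0; rewrite product_measure1E // A0 mul0e. Qed.
Lemma prod0r d1 d2 (T1 : measurableType d1) (T2 : measurableType d2)
  (m1 : {measure set T1 -> \bar R}) (m2 : {sigma_finite_measure set T2 -> \bar R}) A B :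
  measurable A -> measurable B -> m2 B = 0%E -> ((m1 \x m2) (A `*` B) = 0)%E.
Proof. by move=> mA mB B0; rewrite product_measure1E // B0 mule0. Qed.

Lemma bd_null d t : mu (bd d t) = 0%E.
Proof.
have U0 : forall (A B : set T), measurable A -> measurable B -> mu A = 0%E -> mu B = 0%E ->
  mu (A `|` B) = 0%E.
  by move=> A B mA mB A0 B0; move: A0; rewrite /leb2 => A0; rewrite measureU0.
have m1 a : measurable ([set a] `*` [set: R] : set T) by apply: measurableX.
have m2 a : measurable ([set: R] `*` [set a] : set T) by apply: measurableX.
have p1 a : mu ([set a] `*` [set: R]) = 0%E.
  by apply: prod0l => //; first [exact: measurable_set1 | exact: lebs1].
have p2 a : mu ([set: R] `*` [set a]) = 0%E.
  by apply: prod0r => //; first [exact: measurable_set1 | exact: lebs1].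
apply: (U0 _ _ _ (m2 _) _ (p2 _)).
- by apply: measurableU; [apply: measurableU|].
apply: (U0 _ _ _ (m2 _) _ (p2 _)).
- by apply: measurableU.
exact: (U0 _ _ (m1 _) (m1 _) (p1 _) (p1 _)).
Qed.

Lemma ae_notbd d t : \forall z \ae mu, ~ bd d t z.
Proof.
exists (bd d t); split; [exact: mbd | exact: bd_null |].
by move=> z /=; apply: contrapT.
Qed.

Lemma ae_all d (cs : seq T) : \forall z \ae mu, forall t, t \in cs -> ~ bd d t z.
Proof.
have FF := ae_filter_ringOfSetsType (@leb2 R).
elim: cs => [|t cs IH].
  by apply: nearW => z t; rewrite in_nil.
apply: filterS2 (ae_notbd d t) IH => z h1 h2 t'.
by rewrite in_cons => /orP[/eqP->|/h2].
Qed.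

Lemma sqP (d : R) (c z : T) : square d c z <-> (c.1 <= z.1 <= c.1 + d) /\ (c.2 <= z.2 <= c.2 + d).
Proof. by rewrite /square /= !in_itv. Qed.

Lemma osqP (d : R) (c z : T) : open_square d c z <-> (c.1 < z.1 < c.1 + d) /\ (c.2 < z.2 < c.2 + d).
Proof. by rewrite /open_square /= !in_itv. Qed.

Lemma usqP (z : T) : unit_square z <-> (0 <= z.1 <= 1) /\ (0 <= z.2 <= 1).
Proof. by rewrite /unit_square /= !in_itv. Qed.

Lemma sq_open (d : R) (t z : T) : square d t z -> ~ bd d t z -> open_square d t z.
Proof.
move=> /sqP [/andP[a b] /andP[c e]] nb; apply/osqP.
have h1 : z.1 != t.1 by apply/eqP => E; apply: nb; left; left; left.
have h2 : z.1 != t.1 + d by apply/eqP => E; apply: nb; left; left; right.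
have h3 : z.2 != t.2 by apply/eqP => E; apply: nb; left; right.
have h4 : z.2 != t.2 + d by apply/eqP => E; apply: nb; right.
by split; apply/andP; split; rewrite lt_neqAle ?a ?b ?c ?e ?andbT // eq_sym.
Qed.

Lemma part_uniq (d : R) (cs : seq T) : 0 < d -> square_partition d cs -> uniq cs.
Proof.
move=> d0 [_ _ hd]; apply/negPn/negP => /(uniqPn (0, 0)) [i [j [ij js E]]].
have ne : i <> j by move=> E'; move: ij; rewrite E' ltnn.
have := hd i j (ltn_trans ij js) js ne.
rewrite E setIid => /eqP; apply/negP/set0P.
exists ((nth (0, 0) cs j).1 + d / 2, (nth (0, 0) cs j).2 + d / 2); apply/osqP => /=.
have d2 : 0 < d / 2 by rewrite divr_gt0.
have d2' : d / 2 < d by rewrite ltr_pdivrMr // ltr_pMr // ltr1n.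
by split; apply/andP; split => //; lra.
Qed.

Lemma pt_eq (d : R) (cs : seq T) (f : T -> R) (z : T) : 0 < d -> square_partition d cs ->
  (forall z, ~ unit_square z -> f z = 0) -> (forall t, t \in cs -> ~ bd d t z) ->
  f z = \sum_(t <- cs) (f \_ (square d t)) z.
Proof.
move=> d0 hp f0 nb; have uc := @part_uniq d cs d0 hp; case: hp => hsub hcov hd.
have [Uz|Uz] := pselect (unit_square z); last first.
  rewrite f0 // big1_seq // => t tcs; rewrite /patch; case: ifPn => //.
  by rewrite inE => /(hsub _ tcs).
have [t0 /= t0cs sqz] := hcov _ Uz.
rewrite (bigD1_seq t0) //= /patch ifT ?inE //.
rewrite big_seq_cond big1 ?addr0 // => t /andP[tcs tt0]; case: ifPn => //.
rewrite inE => sqt.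
have o0 := sq_open _ _ _ sqz (nb _ t0cs).
have o1 := sq_open _ _ _ sqt (nb _ tcs).
have ne : index t cs <> index t0 cs.
  by move=> E; move: tt0; rewrite -(nth_index (0, 0) tcs) E nth_index // eqxx.
have := hd _ _ _ _ ne; rewrite !nth_index // ?index_mem // => E.
by have : (open_square d t `&` open_square d t0) z by [split]; rewrite E.
Qed.

Lemma msq (d : R) (t : T) : measurable (square d t).
Proof. by apply: measurableX; exact: measurable_itv. Qed.

Lemma integrable_patch (f : T -> R) (A : set T) : measurable A ->
  mu.-integrable setT (EFin \o f) -> mu.-integrable setT (EFin \o (f \_ A)).
Proof.
move=> mA hf.
have : mu.-integrable A (EFin \o f) by apply: integrableS hf.
move/(@integrable_mkcond _ _ _ (@leb2 R) A (EFin \o f) mA).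
have -> : (EFin \o f) \_ A = EFin \o (f \_ A) by apply/funext => z; rewrite /patch /=; case: ifP.
by [].
Qed.

Lemma decomp (d : R) (cs : seq T) (f : T -> R) : 0 < d -> square_partition d cs ->
  mu.-integrable setT (EFin \o f) -> (forall z, ~ unit_square z -> f z = 0) ->
  Rintegral mu setT f = \sum_(t <- cs) Rintegral mu (square d t) f.
Proof.
move=> d0 hp hf f0.
have FF := ae_filter_ringOfSetsType (@leb2 R).
have hi t : mu.-integrable setT (EFin \o (f \_ (square d t))) by apply: integrable_patch => //; exact: msq.
under eq_bigr do rewrite Rintegral_mkcond.
have [hs <-] := @Rint_sum R _ _ (@leb2 R) _ cs (fun t => f \_ (square d t)) hi.
rewrite /Rintegral; congr fine.
apply: ae_eq_integral => //; [exact: measurable_int hf | exact: measurable_int hs |].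
apply: filterS (ae_all d cs) => z nb _ /=; congr EFin; exact: pt_eq.
Qed.

Lemma lebitv (a b : R) : a <= b -> @lebesgue_measure R [set` (`[a, b] : interval R)] = (b - a)%:E.
Proof.
move=> ab; rewrite lebesgue_measure_itv /= lte_fin.
have [ab'|] := ltP a b; first by rewrite EFinB.
move=> ba; have -> : b = a by apply/eqP; rewrite eq_le ab ba.
by rewrite subrr.
Qed.

Lemma mu_sq (d : R) (t : T) : 0 <= d -> mu (square d t) = (d * d)%:E.
Proof.
move=> d0; transitivity (d%:E * d%:E)%E; last by rewrite EFinM.
rewrite /leb2 /square product_measure1E; try exact: measurable_itv.
by congr (_ * _)%E; (etransitivity; [apply: lebitv|]); rewrite ?lerDl // addrC addKr.
Qed.

Lemma mu_U : mu (@unit_square R) = 1%E.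
Proof.
transitivity ((1:R)%:E * (1:R)%:E)%E; last by rewrite mule1.
rewrite /leb2 /unit_square product_measure1E; try exact: measurable_itv.
by congr (_ * _)%E; (etransitivity; [apply: lebitv|]); rewrite ?ler01 // subr0.
Qed.

Lemma mu_U' : ((@leb2 R : {measure set _ -> \bar R}) (@unit_square R) = 1)%E.
Proof. exact: mu_U. Qed.
Lemma mu_sq' (d : R) (t : T) : 0 <= d -> (@leb2 R : {measure set _ -> \bar R}) (square d t) = (d * d)%:E.
Proof. exact: mu_sq. Qed.

Lemma mU : measurable (@unit_square R).
Proof. by apply: measurableX; exact: measurable_itv. Qed.

Lemma sum_const_seq (I : Type) (s : seq I) (c : R) : \sum_(t <- s) c = (size s)%:R * c.
Proof.
elim: s => [|a s IH]; first by rewrite big_nil mul0r.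
by rewrite big_cons IH /= -add1n natrD mulrDl mul1r.
Qed.

Lemma size_cs (d : R) (cs : seq T) : 0 < d -> square_partition d cs ->
  (size cs)%:R * (d * d) = 1.
Proof.
move=> d0 hp.
have hI : mu.-integrable setT (EFin \o \1_(@unit_square R)).
  apply/integrableP; split.
    by apply/measurable_realfun.measurable_EFinP; exact: measurable_realfun.measurable_indic mU.
  under eq_integral do rewrite /= ger0_norm ?indicE ?ler0n //.
  rewrite integral_indic //; last exact: mU.
  rewrite setIT; apply: (@le_lt_trans _ _ 1%E); last exact: ltry.
  have E := mu_U. rewrite -E. exact: lexx.
have h0 : forall z, ~ unit_square z -> \1_(@unit_square R) z = (0:R).
  move=> z nz; rewrite indicE memNset //.
have := @decomp d cs _ d0 hp hI h0.
rewrite /Rintegral integral_indic; [ | by [] | exact: mU].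
rewrite setIT mu_U' /= => E; rewrite [RHS]E.
rewrite big_seq (eq_bigr (fun=> d * d)); first by rewrite -big_seq sum_const_seq.
move=> t tcs; rewrite integral_indic; [ | exact: msq | exact: mU].
have [hsub _ _] := hp.
rewrite setIidr; last exact: hsub.
by rewrite mu_sq' ?ltW.
Qed.
End P3.
Section P4.
Variable R : realType.
Local Notation T := (R2 R).
Local Notation mu := (@leb2 R).

Lemma mphase (x : R5 R) : measurable_fun setT (fun st : T => 2 * pi * phase x st).
Proof.
rewrite /phase.
by repeat (first [apply: measurable_realfun.measurable_funD | apply: measurable_realfun.measurable_funM | apply: measurable_realfun.measurable_funX | exact: measurable_cst | exact: measurable_fst | exact: measurable_snd]).
Qed.

Lemma mcos (x : R5 R) : measurable_fun setT (fun st : T => cos (2 * pi * phase x st)).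
Proof. exact: measurableT_comp (measurable_realfun.continuous_measurable_fun (@continuous_cos R)) (mphase x). Qed.
Lemma msin (x : R5 R) : measurable_fun setT (fun st : T => sin (2 * pi * phase x st)).
Proof. exact: measurableT_comp (measurable_realfun.continuous_measurable_fun (@continuous_sin R)) (mphase x). Qed.

Lemma bcos (x : R5 R) : [bounded cos (2 * pi * phase x st) | st in (setT : set T)].
Proof.
rewrite /bounded_near; near=> M; move=> st _ /=; rewrite (le_trans (cos_max _)) //.
Unshelve. all: by end_near.
Qed.
Lemma bsin (x : R5 R) : [bounded sin (2 * pi * phase x st) | st in (setT : set T)].
Proof.
rewrite /bounded_near; near=> M; move=> st _ /=; rewrite (le_trans (sin_max _)) //.
Unshelve. all: by end_near.
Qed.

Lemma ReM (a b : R[i]) : complex.Re (a * b) = complex.Re a * complex.Re b - complex.Im a * complex.Im b.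
Proof. by case: a => ? ?; case: b. Qed.
Lemma ImM (a b : R[i]) : complex.Im (a * b) = complex.Re a * complex.Im b + complex.Im a * complex.Re b.
Proof. by case: a => ? ?; case: b. Qed.

Lemma integ_re (g : T -> R[i]) (x : R5 R) :
  mu.-integrable setT (fun z => (complex.Re (g z))%:E) ->
  mu.-integrable setT (fun z => (complex.Im (g z))%:E) ->
  mu.-integrable setT (EFin \o (fun z => complex.Re (g z * Defs.expe (phase x z)))).
Proof.
move=> hr hi.
pose c := fun st : T => cos (2 * pi * phase x st).
pose s := fun st : T => sin (2 * pi * phase x st).
pose gr := fun z => (complex.Re (g z))%:E.
pose gi := fun z => (complex.Im (g z))%:E.
have -> : EFin \o (fun z => complex.Re (g z * Defs.expe (phase x z))) =
  (fun z => (gr \* (EFin \o c)) z - (gi \* (EFin \o s)) z)%E.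
  by apply/funext => z /=; rewrite ReM /Defs.expe /= EFinB !EFinM.
apply: integrableB => //; apply: integrableMl => //; first exact: mcos; first exact: bcos.
  exact: msin.
exact: bsin.
Qed.

Lemma integ_im (g : T -> R[i]) (x : R5 R) :
  mu.-integrable setT (fun z => (complex.Re (g z))%:E) ->
  mu.-integrable setT (fun z => (complex.Im (g z))%:E) ->
  mu.-integrable setT (EFin \o (fun z => complex.Im (g z * Defs.expe (phase x z)))).
Proof.
move=> hr hi.
pose c := fun st : T => cos (2 * pi * phase x st).
pose s := fun st : T => sin (2 * pi * phase x st).
pose gr := fun z => (complex.Re (g z))%:E.
pose gi := fun z => (complex.Im (g z))%:E.
have -> : EFin \o (fun z => complex.Im (g z * Defs.expe (phase x z))) =
  (fun z => (gr \* (EFin \o s)) z + (gi \* (EFin \o c)) z)%E.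
  by apply/funext => z /=; rewrite ImM /Defs.expe /= EFinD !EFinM.
apply: integrableD => //; apply: integrableMl => //; first exact: msin; first exact: bsin.
  exact: mcos.
exact: bcos.
Qed.
End P4.
Section P5.
Variable R : realType.
Local Notation T := (R2 R).
Local Notation mu := (@leb2 R).

Lemma cs_ineq (I : Type) (s : seq I) (a : I -> R) :
  (\sum_(i <- s) a i) ^+ 2 <= (size s)%:R * \sum_(i <- s) a i ^+ 2.
Proof.
elim: s => [|b s IH]; first by rewrite !big_nil expr0n /= mul0r.
rewrite !big_cons /=.
set S := \sum_(i <- s) a i in IH *; set Q := \sum_(i <- s) a i ^+ 2 in IH *.
set n := (size s)%:R in IH *.
have n0 : 0 <= n by rewrite ler0n.
have Q0 : 0 <= Q by rewrite sumr_ge0 // => i _; rewrite sqr_ge0.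
have key : 0 <= n * (n * a b ^+ 2 + Q - 2 * a b * S).
  have := sqr_ge0 (n * a b - S); nra.
have key2 : 0 <= n * a b ^+ 2 + Q - 2 * a b * S.
  have [n00|npos] := eqVneq n 0.
    have S0 : S ^+ 2 <= 0 by rewrite (le_trans IH) // n00 mul0r.
    have -> : S = 0 by apply/eqP; rewrite -sqrf_eq0 eq_le S0 sqr_ge0.
    by rewrite n00 mul0r add0r mulr0 subr0.
  by rewrite -(pmulr_rge0 _ (_ : 0 < n)) // lt_neqAle eq_sym npos n0.
have -> : (1 + size s)%:R = n + 1 by rewrite natrD addrC.
nra.
Qed.

Lemma rect_sub (S : set T) : is_rect_in_unit_square S -> S `<=` @unit_square R.
Proof.
move=> [a1 [b1 [a2 [b2 [/andP[a10 ab1] b11 /andP[a20 ab2] b21 ->]]]]] z.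
rewrite /= !in_itv /= => -[/andP[h1 h2] /andP[h3 h4]]; apply/usqP.
split; apply/andP; split; lra.
Qed.

Lemma cabs2 (z : R[i]) : cabs z ^+ 2 = complex.Re z ^+ 2 + complex.Im z ^+ 2.
Proof. by rewrite /cabs sqr_sqrtr // addr_ge0 // sqr_ge0. Qed.

Lemma Rint_supp (S : set T) (f : T -> R) : (forall z, ~ S z -> f z = 0) ->
  Rintegral mu S f = Rintegral mu setT f.
Proof.
move=> f0; rewrite Rintegral_mkcond; congr Rintegral.
apply/funext => z; rewrite /patch; case: ifPn => // /negP zS.
by rewrite f0 // => Sz; apply: zS; rewrite inE.
Qed.

Lemma Eop_bound (Rect : set T) (g : T -> R[i]) (d : R) (cs : seq T) (x : R5 R) :
  0 < d -> square_partition d cs -> is_rect_in_unit_square Rect ->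
  mu.-integrable setT (fun z => (complex.Re (g z))%:E) ->
  mu.-integrable setT (fun z => (complex.Im (g z))%:E) ->
  (forall z, ~ Rect z -> g z = 0) ->
  cabs (Eop Rect g x) ^+ 2 <= (size cs)%:R * \sum_(t <- cs) cabs (Eop (square d t) g x) ^+ 2.
Proof.
move=> d0 hp hR hr hi g0.
set u := fun z => complex.Re (g z * Defs.expe (phase x z)).
set v := fun z => complex.Im (g z * Defs.expe (phase x z)).
have u0 : forall z, ~ Rect z -> u z = 0 by move=> z /g0; rewrite /u => ->; rewrite mul0r.
have v0 : forall z, ~ Rect z -> v z = 0 by move=> z /g0; rewrite /v => ->; rewrite mul0r.
have sub := @rect_sub Rect hR.
have uU : forall z, ~ @unit_square R z -> u z = 0 by move=> z nz; apply: u0 => /sub.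
have vU : forall z, ~ @unit_square R z -> v z = 0 by move=> z nz; apply: v0 => /sub.
have Eu := @decomp R d cs u d0 hp (@integ_re R g x hr hi) uU.
have Ev := @decomp R d cs v d0 hp (@integ_im R g x hr hi) vU.
rewrite /Eop /cintegral2 cabs2 /= -/u -/v !Rint_supp // Eu Ev.
under eq_bigr do rewrite cabs2 /= -/u -/v.
rewrite big_split /= mulrDr.
by apply: lerD; apply: cs_ineq.
Qed.
End P5.

Lemma prod_powR (R : realType) (n : nat) (F : 'I_n -> R) (r : R) : (forall i, 0 <= F i) ->
  \prod_(i < n) (F i `^ r) = (\prod_(i < n) F i) `^ r.
Proof.
elim: n F => [|n IH] F F0; first by rewrite !big_ord0 powR1.
by rewrite !big_ord_recr /= IH // powRM // prodr_ge0.
Qed.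

Theorem lemma8p2 (R : realType)
    (Rect : 'I_10 -> set (R2 R)) (g : 'I_10 -> R2 R -> R[i])
    (p : \bar R) (s : nat) (N : R) (c : R5 R) (cs : seq (R2 R)) :
  (forall i, is_rect_in_unit_square (Rect i)) ->
  (forall i, (@leb2 R).-integrable setT (fun z => (complex.Re (g i z))%:E)) ->
  (forall i, (@leb2 R).-integrable setT (fun z => (complex.Im (g i z))%:E)) ->
  (forall i z, ~ Rect i z -> g i z = 0) ->
  (1 <= p)%E -> (2 <= s)%N -> 1 <= N ->
  square_partition (N `^ (- ((2 ^+ s)^-1))) cs ->
  (wLnorm p c N
     (fun x => ((\prod_(i < 10) cabs (Eop (Rect i) (g i) x)) `^ (10^-1))%R)
   <= (N `^ ((2 ^+ s)^-1))%R%:E *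
      wLnorm p c N
        (fun x => ((\prod_(i < 10)
                     \sum_(tau <- cs)
                        cabs (Eop (square (N `^ (- ((2 ^+ s)^-1))) tau) (g i) x)
                          ^+ 2) `^ (20^-1))%R))%E.
Proof.
move=> hR hr hi hg p1 s2 N1 hp.
set e := (2 ^+ s)^-1 in hp *.
set d := N `^ (- e) in hp *.
set k := N `^ e.
have N0 : 0 < N by rewrite (lt_le_trans ltr01).
have k0 : 0 < k by rewrite powR_gt0.
have d0 : 0 < d by rewrite powR_gt0.
have dk : d = k^-1 by rewrite /d powRN.
have nk : (size cs)%:R = k ^+ 2.
  have := @size_cs R d cs d0 hp; rewrite dk => H.
  have kn0 : k != 0 by rewrite gt_eqF.
  have -> : (size cs)%:R = (size cs)%:R * (k^-1 * k^-1) * k ^+ 2 by field.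
  by rewrite H mul1r.
apply: wLnorm_le => // x.
rewrite (@ger0_norm _ (_ `^ 10^-1)) ?powR_ge0 // (@ger0_norm _ (_ `^ 20^-1)) ?powR_ge0 //.
set S := fun i : 'I_10 => \sum_(tau <- cs) cabs (Eop (square d tau) (g i) x) ^+ 2.
have S0 : forall i, 0 <= S i by move=> i; rewrite sumr_ge0 // => t _; rewrite sqr_ge0.
have ai : forall i, cabs (Eop (Rect i) (g i) x) <= k * (S i) `^ 2^-1.
  move=> i; have := @Eop_bound R (Rect i) (g i) d cs x d0 hp (hR i) (hr i) (hi i) (hg i).
  rewrite nk -/(S i) => H.
  rewrite -(@ler_pXn2r _ 2 erefl) ?nnegrE ?mulr_ge0 ?powR_ge0 ?(ltW k0) ?sqrtr_ge0 //.
  by rewrite exprMn powR12_sqrt ?S0 // (sqr_sqrtr (S0 i)).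
have ca0 : forall i, 0 <= cabs (Eop (Rect i) (g i) x) by move=> i; rewrite sqrtr_ge0.
apply: (@le_trans _ _ ((\prod_(i < 10) (k * S i `^ 2^-1)) `^ 10^-1)).
  apply: (ge0_ler_powR (_ : 0 <= 10^-1)); rewrite ?invr_ge0 ?nnegrE ?prodr_ge0 //.
    by move=> i _; rewrite mulr_ge0 ?powR_ge0 ?(ltW k0).
  by apply: ler_prod => i _; rewrite ca0; exact: ai.
have -> : \prod_(i < 10) \sum_(tau <- cs) cabs (Eop (square d tau) (g i) x) ^+ 2 = \prod_(i < 10) S i by [].
rewrite big_split /= prodr_const card_ord prod_powR //.
have P0 : 0 <= \prod_(i < 10) S i by rewrite prodr_ge0.
rewrite powRM ?exprn_ge0 ?powR_ge0 ?(ltW k0) //.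
rewrite -(powR_mulrn _ (ltW k0)) -!powRrM mulfV ?powRr1 ?(ltW k0) //.
have -> : (2^-1 / 10 : R) = 20^-1 by rewrite -invfM -natrM.
by rewrite mulr1; exact: lexx.
Qed.
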